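(* Fix integers $d\geq 2$ and $n\geq d+2$. For every configuration $X=\{x_i\}_{i\in[n]}$ of $n$ points on the unit sphere $S^{d-1}\subseteq\mathbb{R}^d$, it holds that $\delta(X)\leq 1$. Furthermore, $\delta(X)=1$ if and only if $\alpha(X)=0$. Consequently, when $d+2\leq n\leq 2d$, the $n$-point softmax codes in $S^{d-1}$ are precisely the $n$-point spherical codes in $S^{d-1}$.
   Context: $[n]=\{1,\ldots,n\}$. For a configuration $X=\{x_i\}_{i\in[n]}$ in $S^{d-1}$, define $\delta(X):=\min_{j\in[n]}\operatorname{dist}(x_j,\operatorname{conv}\{x_i\}_{i\in[n]\setminus\{j\}})$ (Euclidean distance to the convex hull of the other points) and $\alpha(X):=\max_{i\neq j}\langle x_i,x_j\rangle$. An $n$-point configuration in $S^{d-1}$ is a softmax code if it maximizes $\delta$ over all $n$-point configurations in $S^{d-1}$, and a spherical code if it minimizes $\alpha$ over all $n$-point configurations in $S^{d-1}$. (It is known that for $n\ge d+2$ one always has $\alpha(X)\ge 0$, with equality achievable iff $n\le 2d$.) *)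

(* Defs.v *)
From HB Require Import structures.
From mathcomp Require Import all_boot all_order all_algebra.
From mathcomp Require Import boolp classical_sets reals.
Set Implicit Arguments. Unset Strict Implicit. Unset Printing Implicit Defensive.
Import Order.TTheory GRing.Theory Num.Theory.
Local Open Scope ring_scope.
Local Open Scope classical_set_scope.

Section Defs.
Variable R : realType.

Definition dotp (d : nat) (u v : 'rV[R]_d) : R := \sum_(k < d) u ord0 k * v ord0 k.
Definition enorm (d : nat) (u : 'rV[R]_d) : R := Num.sqrt (dotp u u).

Definition on_sphere (d n : nat) (X : 'I_n -> 'rV[R]_d) : Prop :=
  forall i, dotp (X i) (X i) = 1.

Definition conv_others (d n : nat) (X : 'I_n -> 'rV[R]_d) (j : 'I_n) : set 'rV[R]_d :=
  [set y | exists w : 'I_n -> R,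
     (forall i, 0 <= w i) /\ \sum_(i < n | i != j) w i = 1 /\
     y = \sum_(i < n | i != j) w i *: X i].

Definition dist_hull (d n : nat) (X : 'I_n -> 'rV[R]_d) (j : 'I_n) : R :=
  inf [set enorm (X j - y) | y in conv_others X j].

(* delta(X) = min_j dist(x_j, conv{x_i}_{i<>j})  (a minimum over a finite set) *)
Definition delta (d n : nat) (X : 'I_n -> 'rV[R]_d) : R :=
  inf [set dist_hull X j | j in [set: 'I_n]].

(* alpha(X) = max_{i<>j} <x_i, x_j>  (a maximum over a finite set) *)
Definition alpha (d n : nat) (X : 'I_n -> 'rV[R]_d) : R :=
  sup [set dotp (X p.1) (X p.2) | p in [set p : 'I_n * 'I_n | p.1 != p.2]].

Definition softmax_code (d n : nat) (X : 'I_n -> 'rV[R]_d) : Prop :=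
  on_sphere X /\ forall Y : 'I_n -> 'rV[R]_d, on_sphere Y -> delta Y <= delta X.

Definition spherical_code (d n : nat) (X : 'I_n -> 'rV[R]_d) : Prop :=
  on_sphere X /\ forall Y : 'I_n -> 'rV[R]_d, on_sphere Y -> alpha X <= alpha Y.

End Defs.

(* Main.v *)
Require Import Defs.
From HB Require Import structures.
From mathcomp Require Import all_boot all_order all_algebra.
From mathcomp Require Import boolp classical_sets reals.
From mathcomp Require Import ring lra zify.
Import Order.TTheory GRing.Theory Num.Theory.
Local Open Scope ring_scope.

Section Aux.
Variable R : realType.
Variable d : nat.
Implicit Types u v w : 'rV[R]_d.

Lemma dotpC u v : dotp u v = dotp v u.
Proof. by apply: eq_bigr => k _; rewrite mulrC. Qed.

Lemma dotpDl u v w : dotp (u + v) w = dotp u w + dotp v w.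
Proof. by rewrite /dotp -big_split; apply: eq_bigr => k _; rewrite mxE mulrDl. Qed.

Lemma dotpZl (a : R) u w : dotp (a *: u) w = a * dotp u w.
Proof. by rewrite /dotp mulr_sumr; apply: eq_bigr => k _; rewrite mxE mulrA. Qed.

Lemma dotpNl u w : dotp (- u) w = - dotp u w.
Proof. by rewrite -scaleN1r dotpZl mulN1r. Qed.

Lemma dotpBl u v w : dotp (u - v) w = dotp u w - dotp v w.
Proof. by rewrite dotpDl dotpNl. Qed.

Lemma dotpDr u v w : dotp w (u + v) = dotp w u + dotp w v.
Proof. by rewrite dotpC dotpDl !(dotpC w). Qed.

Lemma dotpZr (a : R) u w : dotp w (a *: u) = a * dotp w u.
Proof. by rewrite dotpC dotpZl dotpC. Qed.

Lemma dotpBr u v w : dotp w (u - v) = dotp w u - dotp w v.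
Proof. by rewrite dotpC dotpBl !(dotpC w). Qed.

Lemma dotp0l w : dotp 0 w = 0.
Proof. by rewrite /dotp big1 // => k _; rewrite mxE mul0r. Qed.

Lemma dotp_suml (I : finType) (P : pred I) (F : I -> 'rV[R]_d) w :
  dotp (\sum_(i | P i) F i) w = \sum_(i | P i) dotp (F i) w.
Proof.
rewrite /dotp exchange_big /=; apply: eq_bigr => k _.
by rewrite summxE mulr_suml.
Qed.

Lemma dotp_ge0 u : 0 <= dotp u u.
Proof. by apply: sumr_ge0 => k _; rewrite -expr2 sqr_ge0. Qed.

Lemma dotp_sqrB u v : dotp (u - v) (u - v) = dotp u u - 2 * dotp u v + dotp v v.
Proof. rewrite dotpBl !dotpBr (dotpC v u). ring. Qed.

Lemma enorm_lt1 u : dotp u u < 1 -> enorm u < 1.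
Proof. by move=> h; rewrite /enorm -sqrtr1 ltr_sqrt. Qed.

Lemma enorm_ge1 u : 1 <= enorm u -> 1 <= dotp u u.
Proof.
move=> h; rewrite leNgt; apply/negP => /enorm_lt1; by rewrite ltNge h.
Qed.

Lemma ge1_enorm u : 1 <= dotp u u -> 1 <= enorm u.
Proof. by move=> h; rewrite /enorm -sqrtr1 ler_sqrt // (le_trans ler01 h). Qed.

End Aux.

Section Sets.
Variable R : realType.
Variables d n : nat.
Variable X : 'I_n -> 'rV[R]_d.

Lemma other_idx (hn : (1 < n)%N) (j : 'I_n) : exists i : 'I_n, i != j.
Proof.
have h0 : (0 < n)%N by apply: ltn_trans hn.
case: (eqVneq (nat_of_ord j) 0%N) => hj.
  by exists (Ordinal hn); apply/eqP => /(congr1 val) /=; rewrite hj.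
by exists (Ordinal h0); apply/eqP => /(congr1 val) /= h; rewrite -h eqxx in hj.
Qed.

Lemma sum_but (V : zmodType) (F : 'I_n -> V) k : F k = 0 ->
  \sum_(i < n | i != k) F i = \sum_i F i.
Proof. by move=> h; rewrite [RHS](bigD1 k) //= h add0r. Qed.

Lemma sum_delta_but (j i : 'I_n) (F : 'I_n -> 'rV[R]_d) : i != j ->
  \sum_(k < n | k != j) (k == i)%:R *: F k = F i.
Proof.
move=> hij; rewrite (bigD1 i) //= eqxx scale1r big1 ?addr0 // => k /andP [_ hk].
by rewrite (negbTE hk) scale0r.
Qed.

Lemma sum_delta_but_R (j i : 'I_n) : i != j ->
  \sum_(k < n | k != j) ((k == i)%:R : R) = 1.
Proof.
move=> hij; rewrite (bigD1 i) //= eqxx big1 ?addr0 // => k /andP [_ hk].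
by rewrite (negbTE hk).
Qed.

Lemma conv_ne (hn : (1 < n)%N) j : (conv_others X j !=set0)%classic.
Proof.
have [i hi] := other_idx hn j.
exists (X i); exists (fun k => (k == i)%:R); split; first by move=> k; rewrite ler0n.
by rewrite sum_delta_but_R // sum_delta_but.
Qed.

Lemma dist_le j y : conv_others X j y -> dist_hull X j <= enorm (X j - y).
Proof.
move=> hy; apply: ge_inf; last by exists y.
by exists 0 => z [y' _ <-]; apply: sqrtr_ge0.
Qed.

Lemma dist_ge (hn : (1 < n)%N) j r :
  (forall y, conv_others X j y -> r <= enorm (X j - y)) -> r <= dist_hull X j.
Proof.
move=> h; apply: lb_le_inf.
  by have [y hy] := conv_ne hn j; exists (enorm (X j - y)); exists y.
by move=> z [y hy <-]; apply: h.
Qed.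

Lemma dist_ge0 (hn : (1 < n)%N) j : 0 <= dist_hull X j.
Proof. by apply: dist_ge => // y _; apply: sqrtr_ge0. Qed.

Lemma delta_le (hn : (1 < n)%N) j : delta X <= dist_hull X j.
Proof.
apply: ge_inf; last by exists j.
by exists 0 => z [k _ <-]; apply: dist_ge0.
Qed.

Lemma delta_ge (j0 : 'I_n) r : (forall j, r <= dist_hull X j) -> r <= delta X.
Proof.
move=> h; apply: lb_le_inf; first by exists (dist_hull X j0); exists j0.
by move=> z [k _ <-].
Qed.

Definition aset := [set dotp (X p.1) (X p.2) | p in [set p : 'I_n * 'I_n | p.1 != p.2]]%classic.

Lemma aset_ub : has_ubound aset.
Proof.
exists (\sum_(p : 'I_n * 'I_n) `|dotp (X p.1) (X p.2)|) => z [p _ <-].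
apply: le_trans (ler_norm _) _.
rewrite (bigD1 p) //= lerDl; apply: sumr_ge0 => q _; apply: normr_ge0.
Qed.

Lemma alpha_ge i j : i != j -> dotp (X i) (X j) <= alpha X.
Proof. by move=> h; apply: ub_le_sup; [exact: aset_ub | exists (i, j)]. Qed.

Lemma alpha_le (i0 j0 : 'I_n) r : i0 != j0 ->
  (forall i j, i != j -> dotp (X i) (X j) <= r) -> alpha X <= r.
Proof.
move=> h0 h; apply: ge_sup; first by exists (dotp (X i0) (X j0)); exists (i0, j0).
by move=> z [p hp <-]; apply: h.
Qed.

End Sets.

Section Dep.
Variable R : realType.
Variables d n : nat.
Variable X : 'I_n -> 'rV[R]_d.

Lemma exists_dep (m : 'I_n) (hn : (d.+1 < n)%N) :
  exists c : 'I_n -> R, [/\ c m = 0, exists i, c i != 0 & \sum_i c i *: X i = 0].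
Proof.
pose A : 'M[R]_(n, d) := \matrix_(i, k) X i ord0 k.
pose E : 'M[R]_(n, 1) := \matrix_(i, k) (i == m)%:R.
pose B := row_mx A E.
pose K := kermx B.
have hK : K != 0.
  apply/eqP => hK0.
  have := mxrank_ker B; rewrite -/K hK0 mxrank0 => /esym /eqP.
  rewrite subn_eq0 => hr.
  have := leq_trans hr (rank_leq_col B).
  by rewrite leqNgt (leq_trans _ hn) // addn1.
have [[i k] /= hik] : exists ik : 'I_n * 'I_n, K ik.1 ik.2 != 0.
  case: (pickP (fun ik : 'I_n * 'I_n => K ik.1 ik.2 != 0)) => [ik h | H].
    by exists ik.
  suff hK0 : K = 0 by rewrite hK0 eqxx in hK.
  apply/matrixP => a b.
  by move/negbFE: (H (a, b)) => /eqP ->; rewrite mxE.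
have hrow : row i K *m B = 0 by rewrite -row_mul mulmx_ker row0.
clearbody K.
move: hrow; rewrite mul_mx_row -[0 : 'M_(1, d + 1)]row_mx0 => /eq_row_mx [h1 h2].
exists (fun j => K i j); split.
- move/matrixP: h2 => /(_ ord0 ord0); rewrite !mxE => <-.
  rewrite (bigD1 m) //= big1 ?addr0; first by rewrite !mxE eqxx mulr1.
  by move=> j hj; rewrite !mxE (negbTE hj) mulr0.
- by exists k.
- apply/rowP => t; move/matrixP: h1 => /(_ ord0 t); rewrite !mxE => <-.
  rewrite summxE; apply: eq_bigr => j _; rewrite !mxE.
  by rewrite (_ : ord0 = 0).
Qed.

End Dep.

Section L1.
Variable R : realType.
Variables d n : nat.
Variable X : 'I_n -> 'rV[R]_d.
Hypothesis hX : on_sphere X.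

Definition cp (c : 'I_n -> R) i := if 0 <= c i then c i else 0.
Definition cn (c : 'I_n -> R) i := if 0 <= c i then 0 else - c i.

Lemma cp_ge0 c i : 0 <= cp c i.
Proof. by rewrite /cp; case: ifP => // _. Qed.
Lemma cn_ge0 c i : 0 <= cn c i.
Proof. rewrite /cn; case: ifP => // /negbT; rewrite -ltNge; lra. Qed.
Lemma cpn c i : c i = cp c i - cn c i.
Proof. rewrite /cp /cn; case: ifP => _; lra. Qed.
Lemma cn_pos c i : 0 < cn c i -> cp c i = 0.
Proof. by rewrite /cp /cn; case: ifP => //; rewrite ltxx. Qed.
Lemma cp_zero c i : c i = 0 -> cp c i = 0.
Proof. by rewrite /cp => ->; rewrite lexx. Qed.
Lemma cp_opp c i : cp (fun j => - c j) i = cn c i.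
Proof.
rewrite /cp /cn /=; case: (lerP 0 (c i)) => h1; case: (lerP 0 (- c i)) => h2 //; lra.
Qed.
Lemma cn_opp c i : cn (fun j => - c j) i = cp c i.
Proof.
rewrite /cp /cn /=; case: (lerP 0 (c i)) => h1; case: (lerP 0 (- c i)) => h2 //; lra.
Qed.

Lemma dotp_eq0 (u : 'rV[R]_d) : dotp u u = 0 -> u = 0.
Proof.
move=> /eqP; rewrite psumr_eq0 => [/allP h|k _]; last by rewrite -expr2 sqr_ge0.
apply/rowP => k; have := h k (mem_index_enum k); rewrite mulf_eq0 orbb => /eqP ->.
by rewrite mxE.
Qed.

Definition L1concl (m : 'I_n) := conv_others X m 0 \/
  exists k, exists2 y, conv_others X k y & dotp (X k - y) (X k - y) < 1.

Lemma L1core (m : 'I_n) c : c m = 0 -> (exists i, c i != 0) ->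
  \sum_i c i *: X i = 0 -> \sum_i cn c i <= \sum_i cp c i -> L1concl m.
Proof.
move=> hcm [i0 hi0] hsum hst.
set s := \sum_i cp c i in hst; set t := \sum_i cn c i in hst.
have hs : 0 < s.
  have s0 : 0 <= s by apply: sumr_ge0 => i _; apply: cp_ge0.
  rewrite lt_def s0 andbT; apply/eqP => hs0.
  have t0 : t = 0 by apply/le_anti; rewrite -{1}hs0 hst sumr_ge0 // => i _; apply: cn_ge0.
  move/eqP: hs0; rewrite psumr_eq0 => [/allP hp|i _]; last exact: cp_ge0.
  move/eqP: t0; rewrite psumr_eq0 => [/allP hn|i _]; last exact: cn_ge0.
  move: hi0; rewrite cpn (eqP (hp i0 (mem_index_enum _))) (eqP (hn i0 (mem_index_enum _))).
  by rewrite subrr eqxx.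
have hs0 : s != 0 by rewrite gt_eqF.
set p := \sum_i cp c i *: X i.
have hp2 : \sum_i cn c i *: X i = p.
  move: hsum; under eq_bigr do rewrite cpn scalerBl.
  by rewrite sumrB => /eqP; rewrite subr_eq0 => /eqP.
set y := \sum_i (cp c i / s) *: X i.
have hy : y = s^-1 *: p.
  rewrite /y /p scaler_sumr; apply: eq_bigr => i _; by rewrite scalerA mulrC.
have hconv : forall k, cp c k = 0 -> conv_others X k y.
  move=> k hk; exists (fun i => cp c i / s); split; [|split].
  - by move=> i; apply: divr_ge0; [apply: cp_ge0 | apply: ltW].
  - by rewrite sum_but ?hk ?mul0r // -mulr_suml divff.
  - by rewrite sum_but // hk mul0r scale0r.
case: (eqVneq p 0) => hp0.
  left; rewrite (_ : 0 = y); first by apply: hconv; apply: cp_zero.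
  by rewrite hy hp0 scaler0.
right.
have hP : 0 < dotp p p.
  rewrite lt_def dotp_ge0 andbT; apply/eqP => /dotp_eq0; exact/eqP.
have key : \sum_i cn c i * (dotp (X i - y) (X i - y) - 1) < 0.
  have e1 : forall i, cn c i * (dotp (X i - y) (X i - y) - 1) =
      cn c i * dotp y y - 2 * dotp (cn c i *: X i) y.
    by move=> i; rewrite dotp_sqrB hX dotpZl; ring.
  rewrite (eq_bigr _ (fun i _ => e1 i)) sumrB -mulr_suml -mulr_sumr -dotp_suml hp2.
  rewrite -/t hy dotpZl !dotpZr.
  set r := s^-1; have hr : r * s = 1 by rewrite mulVf.
  have hr0 : 0 < r by rewrite invr_gt0.
  set P := dotp p p in hP *.
  have hPr : 0 < r * P by apply: mulr_gt0.
  have htr : t * r <= 1 by rewrite -hr; nra.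
  nra.
case: (pickP (fun k => (0 < cn c k) && (dotp (X k - y) (X k - y) < 1))) => [k /andP [hk1 hk2] | H].
  exists k; exists y => //; apply: hconv; exact: cn_pos.
exfalso; move: key; apply/negP; rewrite -leNgt; apply: sumr_ge0 => k _.
have := H k; have := cn_ge0 c k; rewrite le_eqVlt => /orP [/eqP <- | hk]; first by rewrite mul0r.
rewrite hk /= => /negbT; rewrite -leNgt => h1; apply: mulr_ge0; first exact: ltW.
by rewrite subr_ge0.
Qed.

Lemma L1 (m : 'I_n) (hn : (d.+1 < n)%N) : L1concl m.
Proof.
have [c [hcm [i hi] hs]] := @exists_dep R d n X m hn.
case: (leP (\sum_i cn c i) (\sum_i cp c i)) => hst.
  by apply: (@L1core m c hcm) => //; exists i.
apply: (@L1core m (fun j => - c j)).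
- by rewrite hcm oppr0.
- by exists i; rewrite oppr_eq0.
- by under eq_bigr do rewrite scaleNr; rewrite sumrN hs oppr0.
- under eq_bigr do rewrite cn_opp; under [X in _ <= X]eq_bigr do rewrite cp_opp.
  exact: ltW.
Qed.

End L1.

Arguments L1 {R d n X} hX m hn.
Arguments dist_le {R d n X j y}.
Arguments delta_le {R d n} X hn j.
Arguments delta_ge {R d n X} j0 r.
Arguments dist_ge {R d n X} hn j r.
Arguments alpha_le {R d n X i0 j0 r}.
Arguments alpha_ge {R d n} X {i j}.
Arguments other_idx {n} hn j.
Arguments enorm_lt1 {R d u}.
Arguments enorm_ge1 {R d u}.
Arguments ge1_enorm {R d u}.

Section L234.
Variable R : realType.
Variables d n : nat.
Variable X : 'I_n -> 'rV[R]_d.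
Hypothesis hX : on_sphere X.

Lemma L2 : (forall i j, i != j -> dotp (X i) (X j) <= 0) ->
  forall j y, conv_others X j y -> 1 <= dotp (X j - y) (X j - y).
Proof.
move=> h j y [w [hw [hs ->]]].
rewrite dotp_sqrB hX.
have h1 : dotp (X j) (\sum_(i < n | i != j) w i *: X i) <= 0.
  rewrite dotpC dotp_suml; apply: sumr_le0 => i hi; rewrite dotpZl.
  exact: mulr_ge0_le0 (hw i) (h i j hi).
have := @dotp_ge0 _ _ (\sum_(i < n | i != j) w i *: X i); lra.
Qed.

Lemma L3 j : conv_others X j 0 ->
  (forall y, conv_others X j y -> 1 <= dotp (X j - y) (X j - y)) ->
  forall i, i != j -> dotp (X j) (X i) <= 0.
Proof.
move=> [w [hw [hs h0]]] hge i hij.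
rewrite leNgt; apply/negP => ha.
set a := dotp (X j) (X i) in ha *.
set t := a / (1 + a).
have ha1 : 1 + a != 0 by rewrite gt_eqF //; lra.
have htt : t * (1 + a) = a by rewrite /t mulrVK // unitfE.
have ht0 : 0 < t by rewrite /t divr_gt0 //; lra.
have ht1 : t <= 1 by nra.
clearbody t.
have hc : conv_others X j (t *: X i).
  exists (fun k => (1 - t) * w k + t * (k == i)%:R); split; [|split].
  - by move=> k; apply: addr_ge0; apply: mulr_ge0; rewrite ?hw ?ler0n //; lra.
  - by rewrite big_split /= -!mulr_sumr hs sum_delta_but_R //; ring.
  - under eq_bigr do rewrite scalerDl -!scalerA.
    by rewrite big_split /= -!scaler_sumr -h0 scaler0 add0r sum_delta_but.
have := hge _ hc; rewrite dotp_sqrB hX dotpZr dotpZl dotpZr hX -/a.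
nra.
Qed.

Lemma L4 j : conv_others X j 0 -> (forall i, i != j -> dotp (X i) (X j) <= 0) ->
  exists i, i != j /\ 0 <= dotp (X i) (X j).
Proof.
move=> [w [hw [hs h0]]] h.
have e : \sum_(i < n | i != j) - (w i * dotp (X i) (X j)) = 0.
  have := @dotp0l _ _ (X j); rewrite h0 dotp_suml => he.
  rewrite sumrN; apply/eqP; rewrite oppr_eq0; apply/eqP; rewrite -[RHS]he.
  by apply: eq_bigr => i _; rewrite dotpZl.
case: (pickP (fun i => (i != j) && (0 < w i))) => [i /andP [hij hwi] | H].
  exists i; split => //.
  have hnn : forall k, k != j -> 0 <= - (w k * dotp (X k) (X j)).
    by move=> k hk; rewrite oppr_ge0; apply: mulr_ge0_le0 (hw k) (h k hk).
  have /eqP := psumr_eq0P hnn e hij.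
  by rewrite oppr_eq0 mulf_eq0 (gt_eqF hwi) /= => /eqP ->.
exfalso; move: hs; rewrite big1.
  by move/eqP; rewrite eq_sym oner_eq0.
move=> k hk.
by apply/le_anti; rewrite hw andbT leNgt; move: (H k); rewrite hk /= => ->.
Qed.

End L234.

Arguments L2 {R d n X} hX h j y.
Arguments L3 {R d n X} hX {j}.
Arguments L4 {R d n X j}.

Section Main.
Variable R : realType.
Variables d n : nat.
Hypothesis hn : (d + 2 <= n)%N.

Let hn1 : (1 < n)%N. Proof. lia. Qed.
Let hn2 : (d.+1 < n)%N. Proof. lia. Qed.
Let hn0 : (0 < n)%N. Proof. lia. Qed.
Let j0 : 'I_n := Ordinal hn0.

Section X.
Variable X : 'I_n -> 'rV[R]_d.
Hypothesis hX : on_sphere X.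

Lemma delta_le1 : delta X <= 1.
Proof.
case: (L1 hX j0 hn2) => [h0 | [k [y hy hk]]].
  apply: le_trans (delta_le X hn1 j0) _; apply: le_trans (dist_le h0) _.
  by rewrite subr0 /enorm hX sqrtr1.
apply: le_trans (delta_le X hn1 k) _; apply: le_trans (dist_le hy) _.
exact/ltW/enorm_lt1.
Qed.

Lemma delta_eq1_alpha : delta X = 1 -> alpha X = 0.
Proof.
move=> hd.
have hle : forall j y, conv_others X j y -> 1 <= enorm (X j - y).
  by move=> j y hy; rewrite -hd; apply: le_trans (delta_le X hn1 j) (dist_le hy).
have h0 : forall j, conv_others X j 0.
  move=> j; case: (L1 hX j hn2) => // [[k [y hy hk]]]; exfalso.
  have := hle k y hy; have := enorm_lt1 hk; lra.
have hge : forall j y, conv_others X j y -> 1 <= dotp (X j - y) (X j - y).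
  by move=> j y hy; apply: enorm_ge1; apply: hle.
have hneg : forall i j, i != j -> dotp (X i) (X j) <= 0.
  by move=> i j hij; rewrite dotpC; apply: (L3 hX (h0 j) (hge j)).
have [i1 hi1] := other_idx hn1 j0.
apply/le_anti/andP; split; first exact: (alpha_le hi1).
have [i [hij hi]] := L4 (h0 j0) (fun i hi => hneg i j0 hi).
exact: le_trans hi (alpha_ge X hij).
Qed.

Lemma allneg_delta1 : (forall i j, i != j -> dotp (X i) (X j) <= 0) -> delta X = 1.
Proof.
move=> h; apply/le_anti; rewrite delta_le1 /=; apply: (delta_ge j0) => j.
apply: (dist_ge hn1) => y hy; apply: ge1_enorm; exact: L2.
Qed.

Lemma alpha0_delta1 : alpha X = 0 -> delta X = 1.
Proof. by move=> ha; apply: allneg_delta1 => i j hij; rewrite -ha; apply: alpha_ge. Qed.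

Lemma alpha_ge0 : 0 <= alpha X.
Proof.
rewrite leNgt; apply/negP => ha.
have := delta_eq1_alpha (allneg_delta1 (fun i j hij => ltW (le_lt_trans (alpha_ge X hij) ha))).
lra.
Qed.

End X.

Hypothesis h2d : (n <= 2 * d)%N.

Definition idx (i : 'I_n) : nat := if (i < d)%N then (i : nat) else (i - d)%N.
Definition sg (i : 'I_n) : R := if (i < d)%N then 1 else -1.
Definition ev (a : nat) : 'rV[R]_d := \row_(k < d) (((k : nat) == a)%:R : R).
Definition Y0 (i : 'I_n) : 'rV[R]_d := sg i *: ev (idx i).

Lemma ev_sq a : (a < d)%N -> dotp (ev a) (ev a) = 1.
Proof.
move=> ha; rewrite /dotp (bigD1 (Ordinal ha)) //= !mxE eqxx mulr1 big1 ?addr0 // => k hk.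
rewrite !mxE; move: hk; rewrite -val_eqE /= => /negbTE ->; by rewrite mulr0.
Qed.

Lemma ev_orth a b : a != b -> dotp (ev a) (ev b) = 0.
Proof.
move=> hab; rewrite /dotp big1 // => k _; rewrite !mxE.
case: (eqVneq (k : nat) a) => [hk|]; last by rewrite mul0r.
by rewrite -hk in hab; rewrite (negbTE hab) mulr0.
Qed.

Lemma idx_lt i : (idx i < d)%N.
Proof. rewrite /idx; case: ifP => h; first by []. have := ltn_ord i; lia. Qed.

Lemma Y0_sphere : on_sphere Y0.
Proof.
move=> i; rewrite /Y0 dotpZl dotpZr ev_sq ?idx_lt // mulr1 /sg.
by case: ifP => _; rewrite ?mulr1 ?mulrNN ?mulr1.
Qed.

Lemma sg_prod i j : i != j -> idx i = idx j -> sg i * sg j = -1.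
Proof.
move=> hij; have hij' : (i : nat) != j by [].
rewrite /idx /sg; case: ifP => h1; case: ifP => h2 hid;
  rewrite ?mul1r ?mulr1 ?mulrNN ?mulN1r //;
  by exfalso; move/eqP: hij'; move: h1 h2 hid; lia.
Qed.

Lemma Y0_neg i j : i != j -> dotp (Y0 i) (Y0 j) <= 0.
Proof.
move=> hij; rewrite /Y0 dotpZl dotpZr.
case: (eqVneq (idx i) (idx j)) => hid; last by rewrite ev_orth // !mulr0.
have hs := sg_prod i j hij hid.
rewrite hid mulrA hs mulN1r oppr_le0; exact: dotp_ge0.
Qed.

Lemma delta_Y0 : delta Y0 = 1.
Proof. exact: allneg_delta1 Y0_sphere Y0_neg. Qed.

Lemma alpha_Y0 : alpha Y0 <= 0.
Proof. have [i1 hi1] := other_idx hn1 j0; exact: alpha_le hi1 Y0_neg. Qed.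

Lemma part2 (X : 'I_n -> 'rV[R]_d) : softmax_code X <-> spherical_code X.
Proof.
split.
- move=> [hX hmax]; split => // Y hY.
  have hd : delta X = 1 by apply/le_anti; rewrite delta_le1 //= -{1}delta_Y0; apply: hmax; exact: Y0_sphere.
  by rewrite delta_eq1_alpha // alpha_ge0.
- move=> [hX hmin]; split => // Y hY.
  have ha : alpha X = 0.
    apply/le_anti; rewrite alpha_ge0 // andbT; exact: le_trans (hmin _ Y0_sphere) alpha_Y0.
  have -> : delta X = 1 by exact: alpha0_delta1.
  exact: delta_le1.
Qed.

End Main.

Theorem theorem2 (R : realType) (d n : nat) (hd : (2 <= d)%N) (hn : (d + 2 <= n)%N) :
  (forall X : 'I_n -> 'rV[R]_d, on_sphere X ->
     delta X <= 1 /\ (delta X = 1 <-> alpha X = 0)) /\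
  ((n <= 2 * d)%N ->
     forall X : 'I_n -> 'rV[R]_d, softmax_code X <-> spherical_code X).
Proof.
split.
- move=> X hX; split; first exact: (delta_le1 _ _ _ hn X hX).
  split; [exact: (delta_eq1_alpha _ _ _ hn X hX) | exact: (alpha0_delta1 _ _ _ hn X hX)].
- move=> h2d X; exact: (part2 _ _ _ hn h2d X).
Qed.
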